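(* Let $2\le n\le r$ and let $(X_1,\dots,X_n)$ be a $\{0,1\}$-valued $n$-Markov exchangeable sequence with $P(X_1=0)=1$, represented by the point $w=(w_{0,a,b})_{(a,b)\in\mathcal L_n}$. Then $(X_1,\dots,X_n)$ is $r$-extendible if and only if $w\in\operatorname{conv}\{\gamma^{(n)}_R:R\in\Phi(0,r)\}$. In particular $\operatorname{conv}\{\gamma^{(n)}_R:R\in\Phi(0,r+1)\}\subseteq\operatorname{conv}\{\gamma^{(n)}_R:R\in\Phi(0,r)\}$.
   Context: For a binary sequence its transition count matrix is $N=(n_{i,j})_{i,j\in\{0,1\}}$ with $n_{i,j}$ the number of indices $t$ with $(x_t,x_{t+1})=(i,j)$. $\Phi(0,m)$ is the set of transition count matrices of sequences in $\{0,1\}^m$ starting with $0$. A sequence $(X_1,\dots,X_m)$ is $m$-Markov exchangeable if any two sequences in $\{0,1\}^m$ with the same first value and the same transition count matrix have the same probability. An $n$-Markov exchangeable sequence is $r$-extendible ($r\ge n$) if there is an $r$-Markov exchangeable sequence $(Y_1,\dots,Y_r)$ with $(Y_1,\dots,Y_n)$ equal in law to $(X_1,\dots,X_n)$. Let $\mathcal L_n=\{(a,b)\in\mathbb Z_{\ge0}^2:a+b\le n-2\}\cup\{(n-1,0)\}$; for a distribution of $(X_1,\dots,X_m)$, $m\ge n$, $w_{0,a,b}=P\big((X_1,\dots,X_{a+b+2})=(0^{a+1},1^{b+1})\big)$ for $a+b\le n-2$ and $w_{0,n-1,0}=P(X_1=\dots=X_n=0)$. For $m\ge n$ and $R\in\Phi(0,m)$,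 $h_R$ is the uniform distribution on sequences in $\{0,1\}^m$ starting with $0$ with transition count matrix $R$, and $\gamma^{(n)}_R=(w_{0,a,b})_{(a,b)\in\mathcal L_n}$ computed under $h_R$. *)

(* Defs.v *)
(* Binary values: false = 0, true = 1. *)
From HB Require Import structures.
From mathcomp Require Import all_boot all_order all_algebra.
Set Implicit Arguments. Unset Strict Implicit. Unset Printing Implicit Defensive.
Import Order.TTheory GRing.Theory Num.Theory.
Local Open Scope ring_scope.

Definition tcount (s : seq bool) (i j : bool) : nat :=
  count (fun p : bool * bool => (p.1 == i) && (p.2 == j)) (zip s (behead s)).
Definition tcm (s : seq bool) : nat * nat * nat * nat :=
  (tcount s false false, tcount s false true, tcount s true false, tcount s true true).

Definition Phi0 (m : nat) (N : nat * nat * nat * nat) : Prop :=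
  exists x : m.-tuple bool, head true x = false /\ tcm x = N.

Definition is_dist (R : realFieldType) (m : nat) (mu : m.-tuple bool -> R) : Prop :=
  (forall x, 0 <= mu x) /\ \sum_(x : m.-tuple bool) mu x = 1.

Definition markov_exch (R : realFieldType) (m : nat) (mu : m.-tuple bool -> R) : Prop :=
  forall x y : m.-tuple bool,
    head true x = head true y -> tcm x = tcm y -> mu x = mu y.

Definition prefix_prob (R : realFieldType) (m : nat) (mu : m.-tuple bool -> R)
  (s : seq bool) : R :=
  \sum_(x : m.-tuple bool | take (size s) x == s) mu x.

Definition extendible (R : realFieldType) (n r : nat) (mu : n.-tuple bool -> R) : Prop :=
  exists nu : r.-tuple bool -> R,
    is_dist nu /\ markov_exch nu /\
    forall y : n.-tuple bool, mu y = prefix_prob nu y.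

Definition inLn (n a b : nat) : bool :=
  (a + b <= n - 2)%N || ((a == n.-1) && (b == 0%N)).

(* the point w = (w_{0,a,b}) (meaningful for (a,b) in L_n) *)
Definition wvec (R : realFieldType) (n m : nat) (mu : m.-tuple bool -> R)
  (ab : nat * nat) : R :=
  if (ab.1 + ab.2 <= n - 2)%N
  then prefix_prob mu (nseq ab.1.+1 false ++ nseq ab.2.+1 true)
  else prefix_prob mu (nseq n false).

Definition hR (R : realFieldType) (m : nat) (N : nat * nat * nat * nat)
  (x : m.-tuple bool) : R :=
  if (head true x == false) && (tcm x == N)
  then (#|[pred y : m.-tuple bool | (head true y == false) && (tcm y == N)]|%:R)^-1
  else 0.

Definition gammaR (R : realFieldType) (n m : nat) (N : nat * nat * nat * nat) :
  nat * nat -> R := wvec n (@hR R m N).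

Definition Gset (R : realFieldType) (n m : nat) (g : nat * nat -> R) : Prop :=
  exists N, Phi0 m N /\ g = gammaR R n m N.

Definition in_conv (R : realFieldType) (n : nat) (S : (nat * nat -> R) -> Prop)
  (v : nat * nat -> R) : Prop :=
  exists (k : nat) (c : 'I_k -> R) (p : 'I_k -> nat * nat -> R),
    (forall i, 0 <= c i) /\ \sum_(i < k) c i = 1 /\ (forall i, S (p i)) /\
    forall a b, inLn n a b -> v (a, b) = \sum_(i < k) c i * p i (a, b).

(* Main.v *)
Require Import Defs.
From HB Require Import structures.
From mathcomp Require Import all_boot all_order all_algebra.
From Stdlib Require Import IndefiniteDescription.
Import Order.TTheory GRing.Theory Num.Theory.

Lemma tcount_cons x l i j : tcount (x :: l) i j =
  (if l is y :: _ then ((x == i) && (y == j) : nat) else 0) + tcount l i j.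
Proof. by case: l. Qed.

Lemma tcount_cat x s z i j :
  tcount ((x :: s) ++ z) i j = tcount (x :: s) i j + tcount z i j +
    (if z is y :: _ then ((last x s == i) && (y == j) : nat) else 0).
Proof.
elim: s x => [|y s IH] x.
  by rewrite /= tcount_cons; case: z => [|y z] /=; rewrite ?addn0 // addnC.
rewrite cat_cons tcount_cons IH [in RHS]tcount_cons /=.
by rewrite !addnA.
Qed.

Lemma tcount_rcons x s c i j :
  tcount (rcons (x :: s) c) i j = tcount (x :: s) i j + ((last x s == i) && (c == j) : nat).
Proof. by rewrite -cats1 tcount_cat /= addn0. Qed.

Lemma tcount_last x s :
  tcount (x :: s) false true + x = tcount (x :: s) true false + last x s.
Proof.
elim: s x => [|y s IH] x //.
rewrite !(tcount_cons x) /=.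
have := IH y.
by case: x; case: y => /=; rewrite ?add0n ?add1n ?addn0 ?addn1 ?addSn ?addnS => ->.
Qed.

Lemma tcount_dup p c t i j :
  tcount (p ++ c :: c :: t) i j = ((c == i) && (c == j) : nat) + tcount (p ++ c :: t) i j.
Proof.
elim: p => [|x p IH]; first by rewrite /= tcount_cons.
rewrite !cat_cons !(tcount_cons x) IH.
by case: p {IH} => [|y p] /=; rewrite !addnA (addnC (_ && _)).
Qed.

Definition F j := flatten (nseq j [:: false; true]).
Definition Z a := nseq a.+1 false.
Definition E1 a j b := nseq a.+1 false ++ nseq b.+1 true ++ F j.
Definition E0 a j b := rcons (E1 a j b) false.
Definition isrep (r : seq bool) :=
  (exists a, r = Z a) \/ (exists a j b, r = E1 a j b) \/ (exists a j b, r = E0 a j b).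
Definition tceq s t := forall i j, tcount s i j = tcount t i j.

Lemma tceq_tcm s t : tceq s t -> tcm s = tcm t.
Proof. by move=> H; rewrite /tcm !H. Qed.
Lemma tcm_tceq s t : tcm s = tcm t -> tceq s t.
Proof. by rewrite /tcm => [[]] *; case; case. Qed.

Lemma F_S j : F j.+1 = F j ++ [:: false; true].
Proof. by elim: j => // j; rewrite /F /= => ->. Qed.
Lemma size_F j : size (F j) = (j * 2)%N.
Proof. elim: j => // j IH; rewrite F_S size_cat IH /=. by rewrite mulSn addnC. Qed.
Lemma size_E1 a j b : size (E1 a j b) = (a + b + j * 2).+2%N.
Proof. rewrite /E1 !size_cat !size_nseq size_F. by rewrite !addSn !addnS addnA. Qed.
Lemma size_E0 a j b : size (E0 a j b) = (size (E1 a j b)).+1.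
Proof. by rewrite /E0 size_rcons. Qed.

Lemma last_F j : last true (F j) = true.
Proof. by elim: j => // j IH; rewrite F_S last_cat. Qed.
Lemma last_nseqS x n (c : bool) : last x (nseq n.+1 c) = c.
Proof. by elim: n x => //= n IH x. Qed.
Lemma last_E1 x a j b : last x (E1 a j b) = true.
Proof. by rewrite /E1 !last_cat !last_nseqS last_F. Qed.

Lemma rcons_E0_true a j b : rcons (E0 a j b) true = E1 a j.+1 b.
Proof. by rewrite /E0 /E1 F_S -!cats1 -!catA. Qed.
Lemma rcons_Z_false a : rcons (Z a) false = Z a.+1.
Proof. by rewrite /Z; elim: a => //= a ->. Qed.
Lemma rcons_Z_true a : rcons (Z a) true = E1 a 0 0.
Proof. by rewrite /Z /E1 /F -cats1 /=. Qed.

Lemma T1 a j b : tceq (rcons (E1 a j b) true) (E1 a j b.+1).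
Proof.
move=> i k.
have E : E1 a j b = false :: (nseq a false ++ nseq b.+1 true ++ F j) by [].
rewrite E tcount_rcons -E.
have -> : last false (nseq a false ++ nseq b.+1 true ++ F j) = true.
  by rewrite !last_cat !last_nseqS last_F.
rewrite [E1 a j b.+1](_ : _ = (nseq a.+1 false) ++ true :: true :: (nseq b true ++ F j)) //.
by rewrite tcount_dup addnC.
Qed.

Lemma T2 a j b : tceq (rcons (E0 a j b) false) (E0 a.+1 j b).
Proof.
move=> i k.
have E : E0 a j b = false :: rcons (nseq a false ++ nseq b.+1 true ++ F j) false by [].
rewrite E tcount_rcons last_rcons -E.
rewrite [E0 a.+1 j b](_ : _ = [::] ++ false :: false :: rcons (nseq a false ++ nseq b.+1 true ++ F j) false) //.
by rewrite tcount_dup /= -E addnC.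
Qed.

Lemma tceq_sym s t : tceq s t -> tceq t s.
Proof. by move=> H i j; rewrite H. Qed.
Lemma tceq_trans s t u : tceq s t -> tceq t u -> tceq s u.
Proof. by move=> H1 H2 i j; rewrite H1 H2. Qed.
Lemma tceq_refl s : tceq s s. Proof. by []. Qed.

Lemma step rho c : isrep rho -> exists rho2, isrep rho2 /\
  size rho2 = (size rho).+1 /\ tceq rho2 (rcons rho c) /\ last true rho2 = c.
Proof.
case=> [[a ->]|[[a [j [b ->]]]|[a [j [b ->]]]]]; case: c.
- exists (E1 a 0 0); rewrite rcons_Z_true; split; first by right; left; exists a, 0%N, 0%N.
  by rewrite -rcons_Z_true size_rcons last_rcons.
- exists (Z a.+1); rewrite rcons_Z_false; split; first by left; exists a.+1.
  by rewrite -rcons_Z_false size_rcons last_rcons.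
- exists (E1 a j b.+1); split; first by right; left; exists a, j, b.+1.
  split; first by rewrite !size_E1 !addnS.
  split; first exact: tceq_sym (T1 a j b).
  exact: last_E1.
- exists (E0 a j b); split; first by right; right; exists a, j, b.
  by rewrite /E0 size_rcons last_rcons.
- exists (E1 a j.+1 b); rewrite rcons_E0_true; split; first by right; left; exists a, j.+1, b.
  by rewrite -rcons_E0_true size_rcons last_rcons.
- exists (E0 a.+1 j b); split; first by right; right; exists a.+1, j, b.
  split; first by [].
  split; first exact: tceq_sym (T2 a j b).
  by rewrite /E0 last_rcons.
Qed.

Lemma classify s : 0 < size s -> head true s = false -> exists rho, isrep rho /\
  size rho = size s /\ tceq rho s /\ last true rho = last true s.
Proof.
elim/last_ind: s => [//|t c IH] _.
case: t IH => [|x t] IH.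
  move=> /= ->; exists (Z 0); split; first by left; exists 0%N.
  by [].
move=> /= hx.
have [rho [rr [sr [tr lr]]]] := IH erefl hx.
have [rho2 [rr2 [sr2 [tr2 lr2]]]] := step rho c rr.
exists rho2; split => //; split; first by rewrite sr2 sr size_rcons.
split; last by rewrite lr2 /= last_rcons.
suff H : tceq (rcons rho c) (rcons (x :: t) c) by exact: tceq_trans tr2 H.
case: rho {rr rr2 tr2 lr2 sr2} sr tr lr => [//|y rho] _ tr lr i j.
by rewrite !tcount_rcons tr; move: lr => /= ->.
Qed.

Local Open Scope ring_scope.

Section Prob.
Variable R : realFieldType.

Lemma pp_tuple m (f : m.-tuple bool -> R) (y : m.-tuple bool) :
  prefix_prob f y = f y.
Proof.
rewrite /prefix_prob size_tuple.
rewrite (eq_bigl (fun x => x == y)) ?big_pred1_eq // => x.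
by rewrite take_oversize ?size_tuple.
Qed.

Lemma pp_add m (f : m.-tuple bool -> R) s : (size s < m)%N ->
  prefix_prob f s = prefix_prob f (rcons s false) + prefix_prob f (rcons s true).
Proof.
move=> hs; rewrite /prefix_prob !size_rcons.
rewrite (bigID (fun x : m.-tuple bool => nth false x (size s))) /= addrC.
congr (_ + _); apply: eq_bigl => x; rewrite (take_nth false) ?size_tuple //;
  rewrite eqseq_rcons; by case: (nth false x (size s)); rewrite ?andbT ?andbF.
Qed.

Lemma pp_nil m (f : m.-tuple bool -> R) : prefix_prob f [::] = \sum_x f x.
Proof. by rewrite /prefix_prob; apply: eq_bigl => x; rewrite take0. Qed.

Lemma pp_ext m (f g : m.-tuple bool -> R) s : f =1 g -> prefix_prob f s = prefix_prob g s.
Proof. by move=> H; apply: eq_bigr => x _. Qed.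

Lemma pp_lin m (I : finType) (c : I -> R) (g : I -> m.-tuple bool -> R) s :
  prefix_prob (fun x => \sum_(i : I) c i * g i x) s = \sum_(i : I) c i * prefix_prob (g i) s.
Proof.
rewrite /prefix_prob exchange_big; apply: eq_bigr => i _.
by rewrite mulr_sumr.
Qed.

Lemma pp_marg n m (A : n.-tuple bool -> R) (B : m.-tuple bool -> R) :
  (n <= m)%N -> (forall y, A y = prefix_prob B y) ->
  forall s, (size s <= n)%N -> prefix_prob A s = prefix_prob B s.
Proof.
move=> nm AB.
suff H : forall d s, (size s + d)%N = n -> prefix_prob A s = prefix_prob B s.
  by move=> s hs; apply: (H (n - size s)%N); rewrite subnKC.
elim=> [|d IH] s hs.
  have hs' : size s == n by rewrite -hs addn0.
  by rewrite -[s]/(tval (Tuple hs')) pp_tuple AB.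
have h1 : (size s < n)%N by rewrite -hs addnS ltnS leq_addr.
rewrite pp_add // [RHS]pp_add; last exact: leq_trans h1 nm.
by rewrite !IH // size_rcons addSnnS.
Qed.

Lemma last_eq x s t : tceq (x :: s) (x :: t) -> last x s = last x t.
Proof.
move=> H; have := tcount_last x s; have := tcount_last x t.
rewrite !H => ->; move/eqP; rewrite eqn_add2l.
by case: (last x s); case: (last x t).
Qed.

Lemma pp_mex m (f : m.-tuple bool -> R) : markov_exch f ->
  forall s t, (0 < size s)%N -> size s = size t -> (size s <= m)%N ->
  head true s = head true t -> tceq s t -> prefix_prob f s = prefix_prob f t.
Proof.
move=> mx.
suff H : forall d s t, (size s + d)%N = m -> (0 < size s)%N -> size s = size t ->
  head true s = head true t -> tceq s t -> prefix_prob f s = prefix_prob f t.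
  by move=> s t h0 hst hs; apply: (H (m - size s)%N) => //; rewrite subnKC.
elim=> [|d IH] s t hs h0 hst hh ht.
  have hs' : size s == m by rewrite -hs addn0.
  have ht' : size t == m by rewrite -hst -hs addn0.
  rewrite -[s]/(tval (Tuple hs')) -[t]/(tval (Tuple ht')) !pp_tuple.
  by apply: mx => //=; apply: tceq_tcm.
have h1 : (size s < m)%N by rewrite -hs addnS ltnS leq_addr.
rewrite pp_add // [RHS]pp_add; last by rewrite -hst.
case: s t hs h0 hst hh ht h1 => [//|x s] [//|y t] hs _ hst /= hxy ht h1.
subst y.
have hl := @last_eq x s t ht.
move: hst => /= [hst].
congr (_ + _); apply: IH => //=; rewrite ?size_rcons ?hst //.
- by rewrite -hs /= hst addSnnS.
- by move=> i j; rewrite -!rcons_cons !tcount_rcons ht hl.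
- by rewrite -hs /= hst addSnnS.
- by move=> i j; rewrite -!rcons_cons !tcount_rcons ht hl.

Qed.

Lemma take1 (s : seq bool) : (0 < size s)%N -> take 1 s = [:: head true s].
Proof. by case: s => //= x s _; rewrite take0. Qed.

Lemma head_take k (s : seq bool) : (0 < k)%N -> head true (take k s) = head true s.
Proof. by case: k => // k _; case: s. Qed.

Lemma HZ m (f : m.-tuple bool -> R) : is_dist f -> (0 < m)%N ->
  prefix_prob f [:: false] = 1 -> forall x : m.-tuple bool, head true x = true -> f x = 0.
Proof.
move=> [f0 f1] m0 pf x hx.
have : prefix_prob f [:: true] = 0.
  have := @pp_add m f [::] m0; rewrite pp_nil f1 /= pf.
  by move/esym/eqP; rewrite -subr_eq0 addrC addKr => /eqP.
rewrite /prefix_prob => /psumr_eq0P; apply => //.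
by rewrite /= take1 ?size_tuple // hx.
Qed.

Lemma hR_ge0 m N (x : m.-tuple bool) : 0 <= hR R N x.
Proof. by rewrite /hR; case: ifP => // _; rewrite invr_ge0 ler0n. Qed.

Lemma hR_head m N (x : m.-tuple bool) : head true x = true -> hR R N x = 0.
Proof. by rewrite /hR => ->. Qed.

Lemma hR_mex m N : markov_exch (@hR R m N).
Proof. by move=> x y hh ht; rewrite /hR hh ht. Qed.

Lemma hR_sum m N : Phi0 m N -> \sum_(x : m.-tuple bool) hR R N x = 1.
Proof.
move=> [x0 [h0 t0]].
rewrite /hR -big_mkcond /=.
set P := [pred y : m.-tuple bool | (head true y == false) && (tcm y == N)].
rewrite (eq_bigl (fun x => x \in P)) // sumr_const.
have -> : ((#|P|%:R : R)^-1 *+ #|P| = (#|P|%:R)^-1 * #|P|%:R) by rewrite mulr_natr.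
rewrite mulVf //.
rewrite pnatr_eq0 -lt0n; apply/card_gt0P; exists x0.
by rewrite inE h0 t0 !eqxx.
Qed.

End Prob.

Section Main.
Variable R : realFieldType.

Lemma isrep_head rho : isrep rho -> head true rho = false.
Proof. by case=> [[a ->]|[[a [j [b ->]]]|[a [j [b ->]]]]]. Qed.

Lemma sub2 n k : (2 <= n)%N -> (k <= n - 2)%N = (k.+2 <= n)%N.
Proof. by move=> h; rewrite leq_subRL. Qed.

Lemma wvec_eq n m1 m2 (f : m1.-tuple bool -> R) (g : m2.-tuple bool -> R) ab :
  (2 <= n)%N -> (forall s, (size s <= n)%N -> prefix_prob f s = prefix_prob g s) ->
  wvec n f ab = wvec n g ab.
Proof.
move=> n2 H; rewrite /wvec; case: ifP => h; apply: H.
  by rewrite size_cat !size_nseq addSn addnS -sub2.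
by rewrite size_nseq.
Qed.

Lemma wvec_eq_all n m (f g : m.-tuple bool -> R) ab :
  (forall s, prefix_prob f s = prefix_prob g s) -> wvec n f ab = wvec n g ab.
Proof. by move=> H; rewrite /wvec; case: ifP. Qed.

Lemma wvec_lin n m (I : finType) (c : I -> R) (g : I -> m.-tuple bool -> R) ab :
  wvec n (fun x => \sum_(i : I) c i * g i x) ab = \sum_(i : I) c i * wvec n (g i) ab.
Proof. by rewrite /wvec; case: ifP => _; apply: pp_lin. Qed.

Lemma conv_ext n S (v v' : nat * nat -> R) :
  (forall a b, inLn n a b -> v (a, b) = v' (a, b)) -> in_conv n S v' -> in_conv n S v.
Proof.
move=> H [k [c [p [h1 [h2 [h3 h4]]]]]].
exists k, c, p; do 3! split => //.
by move=> a b hab; rewrite H // h4.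
Qed.

Lemma uniq_w n m (A : n.-tuple bool -> R) (B : m.-tuple bool -> R) :
  (2 <= n)%N -> (n <= m)%N -> markov_exch A -> markov_exch B ->
  (forall x : n.-tuple bool, head true x = true -> A x = 0) ->
  (forall x : m.-tuple bool, head true x = true -> B x = 0) ->
  (forall a b, inLn n a b -> wvec n A (a, b) = wvec n B (a, b)) ->
  forall y : n.-tuple bool, A y = prefix_prob B y.
Proof.
move=> n2 nm mA mB zA zB hw.
pose D s := prefix_prob A s - prefix_prob B s.
have Dclass : forall s t, (0 < size s)%N -> size s = size t -> (size s <= n)%N ->
    head true s = head true t -> tceq s t -> D s = D t.
  move=> s t h0 hst hs hh ht; rewrite /D (@pp_mex R n A mA s t) //.
  by rewrite (@pp_mex R m B mB s t) // (leq_trans hs nm).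
have Dadd : forall s, (size s < n)%N -> D s = D (rcons s false) + D (rcons s true).
  move=> s hs; rewrite /D (@pp_add R n A s hs) (@pp_add R m B s (leq_trans hs nm)).
  by rewrite opprD addrACA.
have HE1 : forall a b, ((a + b).+2 <= n)%N -> D (E1 a 0 b) = 0.
  move=> a b hab.
  have -> : E1 a 0 b = nseq a.+1 false ++ nseq b.+1 true by rewrite /E1 [F 0]/= cats0.
  rewrite /D; have := hw a b; rewrite /inLn sub2 // hab /= /wvec /= sub2 // hab.
  by move=> ->; [apply: subrr|..].
have HZ0 : D (nseq n false) = 0.
  have hf : (n.-1 + 0 <= n - 2)%N = false.
    by case: (n) n2 => [|[|k]] // _; rewrite addn0 /= subSS subSS subn0 ltnn.
  rewrite /D; have := hw n.-1 0%N; rewrite /inLn !eqxx orbT /wvec /= hf.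
  by move=> ->; [apply: subrr|..].
have sizeE1S : forall a j b, size (E1 a j b.+1) = (size (E1 a j b)).+1.
  by move=> a j b; rewrite !size_E1 !addnS.
have PtoQ : forall j, (forall a b, (size (E1 a j b) <= n)%N -> D (E1 a j b) = 0) ->
    (forall a b, (size (E0 a j b) <= n)%N -> D (E0 a j b) = 0).
  move=> j Pj a b hs.
  have hs1 : (size (E1 a j b) < n)%N by rewrite -size_E0.
  have := Dadd _ hs1; rewrite -/(E0 a j b).
  rewrite (Dclass (rcons (E1 a j b) true) (E1 a j b.+1)); first last.
  - exact: T1.
  - by [].
  - by rewrite size_rcons.
  - by rewrite size_rcons sizeE1S.
  - by rewrite size_rcons.
  rewrite Pj ?(ltnW hs1) // Pj; last by rewrite sizeE1S -size_E0.
  by rewrite addr0 => ->.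
have QtoP : forall j, (forall a b, (size (E0 a j b) <= n)%N -> D (E0 a j b) = 0) ->
    (forall a b, (size (E1 a j.+1 b) <= n)%N -> D (E1 a j.+1 b) = 0).
  move=> j Qj a b hs.
  have hsz : size (E1 a j.+1 b) = (size (E0 a j b)).+1 by rewrite -rcons_E0_true size_rcons.
  have hs1 : (size (E0 a j b) < n)%N by rewrite -hsz.
  have := Dadd _ hs1; rewrite rcons_E0_true.
  rewrite (Dclass (rcons (E0 a j b) false) (E0 a.+1 j b)); first last.
  - exact: T2.
  - by [].
  - by rewrite size_rcons.
  - by rewrite size_rcons.
  - by rewrite size_rcons.
  have hsz2 : size (E0 a.+1 j b) = (size (E0 a j b)).+1 by [].
  rewrite Qj ?(ltnW hs1) // Qj; last by rewrite hsz2 -hsz.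
  by rewrite add0r => ->.
have PQ : forall j, (forall a b, (size (E1 a j b) <= n)%N -> D (E1 a j b) = 0) /\
    (forall a b, (size (E0 a j b) <= n)%N -> D (E0 a j b) = 0).
  elim=> [|j [_ Qj]].
    have P0 : forall a b, (size (E1 a 0 b) <= n)%N -> D (E1 a 0 b) = 0.
      by move=> a b; rewrite size_E1 mul0n addn0; apply: HE1.
    by split => //; apply: PtoQ.
  have P1 := QtoP j Qj; split => //; exact: PtoQ.
move=> y; case hy: (head true y).
  rewrite zA // /prefix_prob big1 // => x /eqP hx; apply: zB.
  have n0 : (0 < size y)%N by rewrite size_tuple (leq_trans _ n2).
  by rewrite -(head_take (size y) x) // hx.
have n0 : (0 < size y)%N by rewrite size_tuple (leq_trans _ n2).
have [rho [rr [sr [tr lr]]]] := classify (val y) n0 hy.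
have hr : D rho = 0.
  case: rr sr => [[a ->]|[[a [j [b ->]]]|[a [j [b ->]]]]] sr.
  - by move: sr; rewrite /Z size_nseq size_tuple => ->.
  - by apply: (proj1 (PQ j)); rewrite sr size_tuple.
  - by apply: (proj2 (PQ j)); rewrite sr size_tuple.
have : D y = 0.
  rewrite -hr; apply: Dclass => //; first by rewrite size_tuple.
  - by rewrite hy isrep_head.
rewrite /D /= => /eqP; rewrite subr_eq0 pp_tuple => /eqP.
by [].
Qed.


Lemma fwd n r (nu : r.-tuple bool -> R) : (0 < r)%N -> is_dist nu -> markov_exch nu ->
  (forall x : r.-tuple bool, head true x = true -> nu x = 0) ->
  in_conv n (Gset n r) (wvec n nu).
Proof.
move=> r0 [nu0 nu1] mx z.
pose x0 : r.-tuple bool := nseq_tuple r false.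
have hx0 : head true x0 = false by rewrite /x0 /=; case: (r) r0.
pose xp (x : r.-tuple bool) := if head true x == false then x else x0.
have hxp : forall x, head true (xp x) = false.
  by move=> x; rewrite /xp; case: ifP => // /eqP.
pose g (x : r.-tuple bool) := @hR R r (tcm (xp x)).
have PI : forall y, \sum_x nu x * g x y = nu y.
  move=> y; case hy: (head true y).
    by rewrite z // big1 // => x _; rewrite /g hR_head // mulr0.
  set P := [pred u : r.-tuple bool | (head true u == false) && (tcm u == tcm y)].
  rewrite (eq_bigr (fun x => if x \in P then nu y * (#|P|%:R)^-1 else 0)).
    rewrite -big_mkcond sumr_const.
    have -> : ((nu y * (#|P|%:R)^-1) *+ #|P| = (nu y * (#|P|%:R)^-1) * #|P|%:R)
      by rewrite mulr_natr.
    rewrite -mulrA mulVf ?mulr1 // pnatr_eq0 -lt0n; apply/card_gt0P; exists y.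
    by rewrite inE hy !eqxx.
  move=> x _; rewrite /g /hR; case hx: (head true x).
    by rewrite z // mul0r inE /= hx.
  rewrite /xp hx eqxx hy /=.
  case ht: (tcm y == tcm x).
    move/eqP: ht => ht.
    have -> : nu x = nu y by apply: mx; rewrite ?hx ?hy ?ht.
    by rewrite inE /= hx -ht eqxx /= eqxx.
  by rewrite mulr0 inE /= hx eq_sym ht.
have sumE : forall F : r.-tuple bool -> R,
    \sum_(i < #|{: r.-tuple bool}|) F (enum_val i) = \sum_x F x.
  by move=> F; rewrite -big_enum_val; apply: eq_bigl.
exists #|{: r.-tuple bool}|, (fun i => nu (enum_val i)),
  (fun i => gammaR R n r (tcm (xp (enum_val i)))).
split; first by move=> i; exact: nu0.
split; first by rewrite (sumE nu).
split; first by move=> i; exists (tcm (xp (enum_val i))); split => //; exists (xp (enum_val i)).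
move=> a b _.
rewrite (sumE (fun x => nu x * gammaR R n r (tcm (xp x)) (a, b))) /gammaR.
rewrite -wvec_lin; apply: wvec_eq_all => s.
by apply: pp_ext => y; rewrite PI.
Qed.

Lemma mix m k (c : 'I_k -> R) (N : 'I_k -> nat * nat * nat * nat) :
  (forall i, 0 <= c i) -> \sum_i c i = 1 -> (forall i, Phi0 m (N i)) ->
  let nu := fun x : m.-tuple bool => \sum_i c i * hR R (N i) x in
  is_dist nu /\ markov_exch nu /\ (forall x : m.-tuple bool, head true x = true -> nu x = 0).
Proof.
move=> c0 c1 PN nu; split; [split|split].
- by move=> x; apply: sumr_ge0 => i _; apply: mulr_ge0 => //; apply: hR_ge0.
- rewrite /nu exchange_big /= -[RHS]c1; apply: eq_bigr => i _.
  by rewrite -mulr_sumr hR_sum ?mulr1.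
- by move=> x y hh ht; apply: eq_bigr => i _; rewrite (@hR_mex R m (N i) x y hh ht).
- by move=> x hx; apply: big1 => i _; rewrite hR_head ?mulr0.
Qed.

End Main.

Theorem mainTheorem12 (R : realFieldType) (n r : nat) (mu : n.-tuple bool -> R) :
  (2 <= n)%N -> (n <= r)%N ->
  is_dist mu -> markov_exch mu -> prefix_prob mu [:: false] = 1 ->
  (extendible r mu <-> in_conv n (Gset n r) (wvec n mu)) /\
  (forall v : nat * nat -> R, in_conv n (Gset n r.+1) v -> in_conv n (Gset n r) v).
Proof.
move=> n2 nr dmu mmu pmu.
have n0 : (0 < n)%N by apply: leq_trans n2.
have r0 : (0 < r)%N by apply: leq_trans nr.
have zmu := @HZ R n mu dmu n0 pmu.
split; first split.
- case=> nu [dnu [mnu hnu]].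
  have hpp := @pp_marg R n r mu nu nr hnu.
  have znu : forall x : r.-tuple bool, head true x = true -> nu x = 0.
    by apply: (@HZ R r nu dnu r0); rewrite -hpp.
  apply: (@conv_ext R n _ _ _ _ (@fwd R n r nu r0 dnu mnu znu)) => a b _.
  exact: (@wvec_eq R n n r mu nu _ n2 hpp).
- case=> k [c [p [c0 [c1 [pS pv]]]]].
  pose N i := proj1_sig (constructive_indefinite_description _ (pS i)).
  have hN : forall i, Phi0 r (N i) /\ p i = gammaR R n r (N i).
    by move=> i; rewrite /N; case: constructive_indefinite_description.
  have [dnu [mnu znu]] := @mix R r k c N c0 c1 (fun i => proj1 (hN i)).
  eexists; split; first exact: dnu.
  split; first exact: mnu.
  apply: (@uniq_w R n r) => // a b hab.
  by rewrite pv // wvec_lin; apply: eq_bigr => i _; rewrite (proj2 (hN i)).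
- move=> v [k [c [p [c0 [c1 [pS pv]]]]]].
  pose N i := proj1_sig (constructive_indefinite_description _ (pS i)).
  have hN : forall i, Phi0 r.+1 (N i) /\ p i = gammaR R n r.+1 (N i).
    by move=> i; rewrite /N; case: constructive_indefinite_description.
  have [dnu [mnu znu]] := @mix R r.+1 k c N c0 c1 (fun i => proj1 (hN i)).
  set nu := (fun x : r.+1.-tuple bool => _) in dnu mnu znu.
  pose marg (y : r.-tuple bool) := prefix_prob nu y.
  have hm := @pp_marg R r r.+1 marg nu (leqnSn r) (fun y => erefl).
  have dm : is_dist marg.
    split.
      move=> y; rewrite /marg /prefix_prob; apply: sumr_ge0 => x _; exact: (proj1 dnu).
    by rewrite -(@pp_nil R r marg) hm // (@pp_nil R r.+1 nu) (proj2 dnu).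
  have mm : markov_exch marg.
    move=> x y hh ht; rewrite /marg; apply: (@pp_mex R r.+1 nu mnu) => //.
    - by rewrite size_tuple.
    - by rewrite !size_tuple.
    - by rewrite size_tuple.
    - exact: (tcm_tceq _ _ ht).
  have zm : forall y : r.-tuple bool, head true y = true -> marg y = 0.
    move=> y hy; rewrite /marg /prefix_prob big1 // => x /eqP hx; apply: znu.
    by rewrite -(head_take (size y) x) ?hx // size_tuple.
  apply: (@conv_ext R n _ _ _ _ (@fwd R n r marg r0 dm mm zm)) => a b hab.
  rewrite pv // (@wvec_eq R n r r.+1 marg nu _ n2); last first.
    by move=> s hs; apply: hm; apply: leq_trans nr.
  by rewrite wvec_lin; apply: eq_bigr => i _; rewrite (proj2 (hN i)).
Qed.
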